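(* For all $k,n\in\mathbb{N}$ and every $a\in\mathcal{L}_n^k$, the function $f^a:\mathcal{L}_n^k\to\mathcal{L}_n^k$ is monotone, i.e. $u\le v$ implies $f^a(u)\le f^a(v)$.
   Context: $\mathcal{L}_n^k=\{0,1,\ldots,n-1\}^k$ with the componentwise order $u\le v$ iff $u_i\le v_i$ for all $i\in[k]$. For $a\in\mathcal{L}_n^k$, define $f^a$ coordinatewise: for $v\in\mathcal{L}_n^k$ and $i\in[k]$, $f^a_i(v)=v_i-1$ if $v_i>a_i$ and $v_j\le a_j$ for all $j<i$; $f^a_i(v)=v_i+1$ if $v_i<a_i$ and $v_j\ge a_j$ for all $j<i$; and $f^a_i(v)=v_i$ otherwise. Then $f^a(v)=(f^a_1(v),\ldots,f^a_k(v))$. *)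

(* Defs.v *)
From mathcomp Require Import all_boot.
Set Implicit Arguments. Unset Strict Implicit. Unset Printing Implicit Defensive.

(* Points of L_n^k are represented as functions 'I_k -> nat (coordinates
   indexed 0..k-1, standing for 1..k) with all coordinates < n. *)
Definition inL (n k : nat) (v : 'I_k -> nat) : Prop := forall i, v i < n.

Definition leL (k : nat) (u v : 'I_k -> nat) : Prop := forall i, u i <= v i.

Definition fa (k : nat) (a v : 'I_k -> nat) : 'I_k -> nat := fun i =>
  if (a i < v i) && [forall j : 'I_k, (j < i) ==> (v j <= a j)] then (v i).-1
  else if (v i < a i) && [forall j : 'I_k, (j < i) ==> (a j <= v j)] then (v i).+1
  else v i.

(* Main.v *)
Require Import Defs.
From mathcomp Require Import all_boot.
From mathcomp Require Import zify.

Theorem lemma4 (k n : nat) (a u v : 'I_k -> nat) :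
  inL n a -> inL n u -> inL n v ->
  leL u v -> leL (fa a u) (fa a v).
Proof.
move=> _ _ _ Huv i; rewrite /fa.
have HD : [forall j : 'I_k, (j < i) ==> (v j <= a j)] ->
          [forall j : 'I_k, (j < i) ==> (u j <= a j)].
  move/forallP=> H; apply/forallP=> j; apply/implyP=> ji.
  exact: leq_trans (Huv j) (implyP (H j) ji).
have HU : [forall j : 'I_k, (j < i) ==> (a j <= u j)] ->
          [forall j : 'I_k, (j < i) ==> (a j <= v j)].
  move/forallP=> H; apply/forallP=> j; apply/implyP=> ji.
  exact: leq_trans (implyP (H j) ji) (Huv j).
have Hi := Huv i.
move: HD HU.
case: [forall j : 'I_k, (j < i) ==> (v j <= a j)];
case: [forall j : 'I_k, (j < i) ==> (u j <= a j)];
case: [forall j : 'I_k, (j < i) ==> (a j <= u j)];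
case: [forall j : 'I_k, (j < i) ==> (a j <= v j)] => //= HD HU;
rewrite ?andbT ?andbF;
repeat (case: ifP => /=); lia.
Qed.
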